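(* Let $T$ be a reduced linear trellis of length $n$ with span distribution $\mathcal{S}(T)$, and for each $\mathfrak{s}\in\mathcal{S}(T)$ let $m(\mathfrak{s},T)$ be its multiplicity. Let $\boldsymbol{\alpha}^{\mathfrak{s},i}\in\mathbb{F}^n$ ($\mathfrak{s}\in\mathcal{S}(T)$, $1\le i\le m(\mathfrak{s},T)$) be vectors each having span $\mathfrak{s}$. Then $$T\sim\bigotimes_{\mathfrak{s}\in\mathcal{S}(T)}\bigotimes_{i=1}^{m(\mathfrak{s},T)}\boldsymbol{\alpha}^{\mathfrak{s},i}|\mathfrak{s}$$ if and only if for every $\mathfrak{s}\in\mathcal{S}(T)$ $$C_{\mathfrak{s}}(T)=\langle\boldsymbol{\alpha}^{\mathfrak{s},1},\dots,\boldsymbol{\alpha}^{\mathfrak{s},m(\mathfrak{s},T)}\rangle+\sum_{\mathfrak{s}'<\mathfrak{s}}C_{\mathfrak{s}'}(T).$$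
   Context: Let $\mathbb{F}$ be a finite field and $n\ge1$; indices are taken in $\mathbb{Z}_n$. A trellis $T$ of length $n$ over $\mathbb{F}$ consists of pairwise disjoint finite vertex sets $V_i(T)$, $i\in\mathbb{Z}_n$, and edge sets $E_i(T)\subseteq V_i(T)\times\mathbb{F}\times V_{i+1}(T)$; $(v,\alpha,w)\in E_i(T)$ is an edge from $v$ to $w$ with label $\alpha$. Trellises are trim. $T$ is linear if each $V_i(T)$ is an $\mathbb{F}$-vector space and each $E_i(T)$ a subspace. A cycle is a closed path of length $n$ starting in $V_0(T)$, identified with $(\mathbf{v},\boldsymbol{\alpha})\in\prod_iV_i(T)\times\mathbb{F}^n$; $\mathbb{S}(T)$ is the space of cycles, $L(\mathbf{v},\boldsymbol{\alpha})=\boldsymbol{\alpha}$. $T$ is reduced if every edge lies on a cycle. $T\sim T'$ means there are bijections $f_i:V_i(T)\to V_i(T')$ with $(v,\alpha,w)\in E_i(T)\iff(f_i(v),\alpha,f_{i+1}(w))\in E_i(T')$. Spans: for $a\in\mathbb{Z}_n$, $0\le l\le n-1$, $[a,a+l]=\{a,\dots,a+l\}\subseteq\mathbb{Z}_n$, $(a,a+l]=[a,a+l]\setminus\{a\}$; $(a,l)$ is a span; degenerate spans are $\emptyset$ (length $-1$) and $\mathbb{Z}_n$ (length $n$, written $(a,n)$). Partial order: $(a_1,l_1)\le(a_2,l_2)$ iff ($l_1\le l_2<n-1$ and $[a_1,a_1+l_1]\subseteq[a_2,a_2+l_2]$) or ($l_2=n-1$ and $(a_1,a_1+l_1]\subseteq(a_2,a_2+l_2]$)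 or $l_1=-1$ or $l_2=n$; $\mathfrak{s}'<\mathfrak{s}$ means $\mathfrak{s}'\le\mathfrak{s}$, $\mathfrak{s}'\ne\mathfrak{s}$. A vector in $\mathbb{F}^n$ has span $(a,l)$, $0\le l\le n-1$, if its support lies in $[a,a+l]$; $\mathbb{Z}_n$ is a span of every vector. A nondegenerate $(a,l)$ is a span of a cycle $(\mathbf{v},\boldsymbol{\alpha})$ if $\{i:v_i\ne0\}\subseteq(a,a+l]$ and $\{i:\alpha_i\ne0\}\subseteq[a,a+l]$; $\emptyset$ is a span only of the zero cycle and $\mathbb{Z}_n$ of every cycle. $\mathbb{S}_{\mathfrak{s}}(T)$ is the subspace of cycles with span $\mathfrak{s}$ and $C_{\mathfrak{s}}(T):=L(\mathbb{S}_{\mathfrak{s}}(T))$. Elementary trellis $\boldsymbol{\alpha}|(a,l)$ ($\boldsymbol{\alpha}$ of span $(a,l)$, $0\le l\le n$): $V_i=\mathbb{F}$ for $i\in(a,a+l]$ (all $i$ if $l=n$), $V_i=0$ otherwise, $E_i=\langle(u_i,\alpha_i,u_{i+1})\rangle$ with $u_i=1$ if $i\in(a,a+l]$, else $0$. The product $T\otimes T'$ has $V_i=V_i(T)\times V_i(T')$ and $E_i=\{((v,v'),\alpha+\alpha',(w,w')):(v,\alpha,w)\in E_i(T),(v',\alpha',w')\in E_i(T')\}$. An elementary trellis factorization of $T$ is an expression $T\sim\bigotimes_{i=1}^r\boldsymbol{\alpha}^i|(a_i,l_i)$ with at most one factor of span $(a,0)$ for each $a$. Every reduced linear trellis has one,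 and all have the same multiset of spans, the span distribution $\mathcal{S}(T)$. *)

(* Defs.v *)
From HB Require Import structures.
From mathcomp Require Import all_boot all_order all_algebra all_fingroup all_field.
Unset Printing Implicit Defensive.
Import GRing.Theory.
Local Open Scope ring_scope.

Section Trellis.
Variables (F : finFieldType) (n : nat).

Definition nxt (i : 'I_n) : 'I_n := ordS i.

(* A trellis: vertex set V_i is the F-vector space 'rV_(tdim i) (any finite
   F-vector space is isomorphic to one of these, and ~ only sees bijections);
   E_i is a set of triples (v, alpha, w). *)
Record trellis := Trellis {
  tdim : 'I_n -> nat;
  tedges : forall i : 'I_n, {set ('rV[F]_(tdim i) * F * 'rV[F]_(tdim (nxt i)))}
}.

Definition is_linear (T : trellis) : Prop :=
  forall i, ((0 : 'rV_(tdim T i)), (0 : F), (0 : 'rV_(tdim T (nxt i)))) \in tedges T i /\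
    forall (c : F) e e', e \in tedges T i -> e' \in tedges T i ->
      (c *: e.1.1 + e'.1.1, c * e.1.2 + e'.1.2, c *: e.2 + e'.2) \in tedges T i.

Definition is_trim (T : trellis) : Prop :=
  (forall i (v : 'rV_(tdim T i)), exists a w, (v, a, w) \in tedges T i) /\
  (forall i (w : 'rV_(tdim T (nxt i))), exists v a, (v, a, w) \in tedges T i).

Definition is_cycle (T : trellis) (v : forall i, 'rV[F]_(tdim T i)) (al : 'rV[F]_n) : bool :=
  [forall i, (v i, al 0 i, v (nxt i)) \in tedges T i].

Definition is_reduced (T : trellis) : Prop :=
  forall i e, e \in tedges T i ->
    exists (v : forall j, 'rV[F]_(tdim T j)) (al : 'rV[F]_n),
      is_cycle T v al /\ v i = e.1.1 /\ al 0 i = e.1.2 /\ v (nxt i) = e.2.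

Definition trellis_equiv (T T' : trellis) : Prop :=
  exists f : forall i, 'rV[F]_(tdim T i) -> 'rV[F]_(tdim T' i),
    (forall i, bijective (f i)) /\
    forall i v a w, ((v, a, w) \in tedges T i) = ((f i v, a, f (nxt i) w) \in tedges T' i).

(* spans: inl (a, l) is the nondegenerate span (a,l), 0 <= l <= n-1;
   inr false is the empty span, inr true is Z_n. *)
Definition tspan := (('I_n * 'I_n) + bool)%type.
Definition sEmpty : tspan := inr false.
Definition sFull : tspan := inr true.

(* [a, a+l] and (a, a+l] in Z_n *)
Definition cc (a l : 'I_n) (i : 'I_n) : bool := ((i + n - a) %% n <= l)%N.
Definition oc (a l : 'I_n) (i : 'I_n) : bool := (0 < (i + n - a) %% n <= l)%N.

Definition span_le (s1 s2 : tspan) : bool :=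
  match s1, s2 with
  | inr false, _ => true
  | _, inr true => true
  | inl (a1, l1), inl (a2, l2) =>
      ((l1 <= l2)%N && (l2 < n.-1)%N && [forall i, cc a1 l1 i ==> cc a2 l2 i])
      || ((val l2 == n.-1) && [forall i, oc a1 l1 i ==> oc a2 l2 i])
  | _, _ => false
  end.
Definition span_lt (s1 s2 : tspan) : bool := (s1 != s2) && span_le s1 s2.

Definition vec_has_span (al : 'rV[F]_n) (s : tspan) : bool :=
  match s with
  | inl (a, l) => [forall i, (al 0 i != 0) ==> cc a l i]
  | inr false => al == 0
  | inr true => true
  end.

Definition cycle_has_span (T : trellis) (v : forall i, 'rV[F]_(tdim T i))
    (al : 'rV[F]_n) (s : tspan) : bool :=
  match s with
  | inl (a, l) => [forall i, (v i != 0) ==> oc a l i] && [forall i, (al 0 i != 0) ==> cc a l i]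
  | inr false => [forall i, v i == 0] && (al == 0)
  | inr true => true
  end.

(* C_s(T) = L(S_s(T)); T linear so S_s(T) is a subspace and the span of the
   set of labels equals the set of labels itself. *)
Definition Cspan (T : trellis) (s : tspan) : {vspace 'rV[F]_n} :=
  <<enum [set al : 'rV[F]_n | [exists v : {dffun forall i, 'rV[F]_(tdim T i)},
                                  is_cycle T v al && cycle_has_span T v al s]]>>%VS.

Definition elem_in (s : tspan) (i : 'I_n) : bool :=
  match s with inl (a, l) => oc a l i | inr b => b end.

Definition elem_trellis (al : 'rV[F]_n) (s : tspan) : trellis :=
  @Trellis (fun i => nat_of_bool (elem_in s i))
    (fun i => [set (c *: const_mx 1, c * al 0 i, c *: const_mx 1) | c : F]).

(* product of trellises; V_i(T) x V_i(T') is realised as 'rV_(d + d') via row_mx *)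
Definition tensor (T T' : trellis) : trellis :=
  @Trellis (fun i => (tdim T i + tdim T' i)%N)
    (fun i => [set (row_mx e.1.1 e'.1.1, e.1.2 + e'.1.2, row_mx e.2 e'.2)
              | e in tedges T i, e' in tedges T' i]).

Definition unit_trellis : trellis :=
  @Trellis (fun _ => 0%N) (fun i => [set (0, 0, 0)]).

Definition tensor_list (fac : seq (tspan * 'rV[F]_n)) : trellis :=
  foldr (fun p T => tensor (elem_trellis p.2 p.1) T) unit_trellis fac.

Definition is_elem_factorization (T : trellis) (fac : seq (tspan * 'rV[F]_n)) : Prop :=
  (forall p, p \in fac -> p.1 != sEmpty /\ vec_has_span p.2 p.1) /\
  (forall a : 'I_n,
     (count (fun s : tspan => if s is inl (a', l) then (a' == a) && (val l == 0)%N else false)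
            (map fst fac) <= 1)%N) /\
  trellis_equiv T (tensor_list fac).

(* M (a multiset of spans, as a seq up to permutation) is the tspan
   distribution S(T) *)
Definition span_distribution (T : trellis) (M : seq tspan) : Prop :=
  exists fac, is_elem_factorization T fac /\ perm_eq (map fst fac) M.

End Trellis.

Arguments nxt {n}.
Arguments tdim {F n}.
Arguments tedges {F n}.
Arguments is_linear {F n}.
Arguments is_trim {F n}.
Arguments is_cycle {F n}.
Arguments is_reduced {F n}.
Arguments trellis_equiv {F n}.
Arguments sEmpty {n}.
Arguments sFull {n}.
Arguments cc {n}.
Arguments oc {n}.
Arguments span_le {n}.
Arguments span_lt {n}.
Arguments vec_has_span {F n}.
Arguments cycle_has_span {F n}.
Arguments Cspan {F n}.
Arguments elem_in {n}.
Arguments elem_trellis {F n}.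
Arguments tensor {F n}.
Arguments unit_trellis {F n}.
Arguments tensor_list {F n}.
Arguments is_elem_factorization {F n}.
Arguments span_distribution {F n}.

(* Main.v *)
Require Import Defs.
From HB Require Import structures.
From mathcomp Require Import all_boot all_order all_algebra all_fingroup all_field.
From mathcomp Require Import zify.
Require Import Defs.
Set Implicit Arguments. Unset Strict Implicit. Unset Printing Implicit Defensive.
Import GRing.Theory.
Local Open Scope ring_scope.

Section Mod.
Variables (n : nat) (n_gt0 : (0 < n)%N).

Definition off (a i : 'I_n) : nat := ((i + (n - a)) %% n)%N.
Definition pos (a : 'I_n) (d : nat) : 'I_n := Ordinal (ltn_pmod (a + d) n_gt0).

Lemma offE (a i : 'I_n) : ((i + n - a) %% n)%N = off a i.
Proof. by rewrite /off addnBA // ltnW. Qed.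

Lemma off_lt (a i : 'I_n) : (off a i < n)%N.
Proof. exact: ltn_pmod. Qed.

Lemma off_pos (a : 'I_n) d : (d < n)%N -> off a (pos a d) = d.
Proof.
move=> dn; rewrite /off /= modnDml.
have ->: (a + d + (n - a) = d + n)%N by have := ltn_ord a; lia.
by rewrite modnDr modn_small.
Qed.

Lemma pos_off (a i : 'I_n) : pos a (off a i) = i.
Proof.
apply: val_inj; rewrite /= /off modnDmr.
have ->: (a + (i + (n - a)) = i + n)%N by have := ltn_ord a; lia.
by rewrite modnDr modn_small.
Qed.

Lemma nxt_pos (a : 'I_n) d : nxt (pos a d) = pos a d.+1.
Proof. by apply: val_inj; rewrite /= -addn1 modnDml addn1 addnS. Qed.

Lemma off_pos2 (a b : 'I_n) j : off a (pos b j) = ((off a b + j) %% n)%N.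
Proof.
rewrite /off /= modnDml modnDml; congr (_ %% _)%N; lia.
Qed.

Lemma off_self (a : 'I_n) : off a a = 0%N.
Proof. by rewrite /off subnKC ?modnn // ltnW. Qed.

Lemma pos0 (a : 'I_n) : pos a 0 = a.
Proof. by apply: val_inj; rewrite /= addn0 modn_small. Qed.

Lemma off_eq (a i j : 'I_n) : off a i = off a j -> i = j.
Proof. by move=> h; rewrite -(pos_off a i) h pos_off. Qed.

End Mod.

Section Order.
Variables (n : nat) (n_gt0 : (0 < n)%N).

Lemma modn2 x : (x < n + n)%N -> (x %% n = if x < n then x else x - n)%N.
Proof.
case: ifP => h; first by rewrite modn_small.
move=> h2; rewrite -{1}(subnK (n:=x) (m:=n)); last by lia.
by rewrite modnDr modn_small //; lia.
Qed.

Lemma ccE (a l i : 'I_n) : cc a l i = (off a i <= l)%N.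
Proof. by rewrite /cc offE. Qed.
Lemma ocE (a l i : 'I_n) : oc a l i = (0 < off a i <= l)%N.
Proof. by rewrite /oc offE. Qed.

Lemma off_ltn (a i : 'I_n) : (off a i < n)%N.
Proof. exact: ltn_pmod. Qed.

Definition incl (P Q : pred 'I_n) := [forall i, P i ==> Q i].

Lemma le_char (a1 l1 a2 l2 : 'I_n) :
  span_le (inl (a1, l1)) (inl (a2, l2)) =
  incl (oc a1 l1) (oc a2 l2) && incl (cc a1 l1) (cc a2 l2).
Proof.
rewrite /span_le /incl.
apply/idP/idP.
- case/orP=> [/andP[/andP[h12 h2]] /forallP hc | /andP[/eqP h2 /forallP ho]].
  + apply/andP; split; apply/forallP=> i; apply/implyP=> hi; last exact: (implyP (hc i)).
    have hi' : cc a1 l1 i by move: hi; rewrite ocE ccE; lia.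
    move: (implyP (hc i) hi'); rewrite ocE ccE => hc2.
    move: hi; rewrite ocE => /andP[d0 dl].
    have [ei|ne] := eqVneq i a2.
      rewrite ei in d0 dl.
      exfalso.
      have := implyP (hc (pos n_gt0 a1 (off a1 a2).-1)).
      rewrite !ccE off_pos; last by have := off_ltn a1 a2; lia.
      rewrite off_pos2.
      have e1 : off a2 (pos n_gt0 a1 (off a1 a2)) = 0%N by rewrite pos_off off_self.
      move: e1; rewrite off_pos2 => e1.
      have hl : (off a2 a1 + off a1 a2 < n + n)%N by have := off_ltn a2 a1; have := off_ltn a1 a2; lia.
      move: e1; rewrite modn2 // => e1.
      have hl2 : (off a2 a1 + (off a1 a2).-1 < n + n)%N by lia.
      rewrite modn2 //.
      move: e1; case: ifP => c0 e1; first lia.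
      case: ifP => c1 H; have := H ltac:(lia); have := ltn_ord l2; have := off_ltn a2 a1; lia.
    rewrite hc2 andbT lt0n; apply/eqP => h0; move/eqP: ne; apply.
    by apply: (off_eq n_gt0 (a:=a2)); rewrite h0 off_self.
  + apply/andP; split; apply/forallP=> i; apply/implyP=> hi; first exact: (implyP (ho i)).
    by rewrite ccE h2; have := off_ltn a2 i; lia.
- case/andP=> /forallP ho /forallP hc.
  have [e|ne] := eqVneq (val l2) n.-1.
    by apply/orP; right; apply/andP; split; [apply/eqP | apply/forallP].
  have ne2 : (nat_of_ord l2) <> n.-1 by move/eqP: ne.
  have l2lt : (l2 < n.-1)%N by have := ltn_ord l2; lia.
  apply/orP; left; rewrite l2lt andbT; apply/andP; split; last by apply/forallP.
  have ha1 := implyP (hc a1); rewrite !ccE off_self in ha1.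
  have d2 := ha1 (leq0n _).
  have [big|small] := leqP n.-1 (off a2 a1 + l1).
    exfalso.
    have := implyP (hc (pos n_gt0 a1 (n.-1 - off a2 a1))).
    rewrite !ccE off_pos; last by lia.
    rewrite off_pos2 modn_small; last by lia.
    have -> : (off a2 a1 + (n.-1 - off a2 a1) = n.-1)%N by lia.
    move/(_ ltac:(lia)); lia.
  have := implyP (hc (pos n_gt0 a1 l1)).
  rewrite !ccE off_pos // off_pos2 modn_small; last by lia.
  move/(_ (leqnn _)); lia.
Qed.


Lemma incl_refl (P : pred 'I_n) : incl P P.
Proof. by apply/forallP=> i; apply/implyP. Qed.
Lemma incl_trans (P Q R : pred 'I_n) : incl P Q -> incl Q R -> incl P R.
Proof.
move=> /forallP h1 /forallP h2; apply/forallP=> i; apply/implyP=> hp.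
exact: (implyP (h2 i) (implyP (h1 i) hp)).
Qed.

Lemma le_refl (s : tspan n) : span_le s s.
Proof. by case: s => [[a l]|[]] //; rewrite le_char !incl_refl. Qed.

Lemma le_trans (s1 s2 s3 : tspan n) : span_le s1 s2 -> span_le s2 s3 -> span_le s1 s3.
Proof.
case: s1 => [[a1 l1]|[]] //; case: s3 => [[a3 l3]|[]] //;
case: s2 => [[a2 l2]|[]] //.
rewrite !le_char => /andP[h1 h2] /andP[h3 h4].
by rewrite (incl_trans h1 h3) (incl_trans h2 h4).
Qed.

Lemma le_antisym (s1 s2 : tspan n) : span_le s1 s2 -> span_le s2 s1 -> s1 = s2.
Proof.
case: s1 => [[a1 l1]|[]] //; case: s2 => [[a2 l2]|[]] //.
rewrite !le_char => /andP[/forallP o12 /forallP c12] /andP[/forallP o21 /forallP c21].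
have ea : a1 = a2.
  have h := implyP (c12 a1); rewrite !ccE off_self in h.
  have h2 : ~~ oc a2 l2 a1.
    apply/negP=> hh; have := implyP (o21 a1) hh; by rewrite ocE off_self.
  have h3 := h (leq0n _); move: h2; rewrite ocE h3 andbT lt0n negbK => /eqP h4.
  by apply: (off_eq n_gt0 (a:=a2)); rewrite h4 off_self.
subst a2.
have el : nat_of_ord l1 = l2.
  have h1 := implyP (c12 (pos n_gt0 a1 l1)); have h2 := implyP (c21 (pos n_gt0 a1 l2)).
  rewrite !ccE !off_pos // in h1 h2.
  have := h1 (leqnn _); have := h2 (leqnn _); lia.
by congr (inl (_, _)); apply: val_inj.
Qed.

Lemma lt_trans (s1 s2 s3 : tspan n) : span_lt s1 s2 -> span_lt s2 s3 -> span_lt s1 s3.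
Proof.
rewrite /span_lt => /andP[n12 l12] /andP[n23 l23].
rewrite (le_trans l12 l23) andbT; apply/eqP => e; subst s3.
by move: n12; rewrite (le_antisym l12 l23) eqxx.
Qed.

Lemma lt_irr (s : tspan n) : span_lt s s = false.
Proof. by rewrite /span_lt eqxx. Qed.

Lemma le_eqVlt (s1 s2 : tspan n) : span_le s1 s2 = (s1 == s2) || span_lt s1 s2.
Proof.
rewrite /span_lt; have [->|] := eqVneq s1 s2; last by [].
by rewrite le_refl.
Qed.

Lemma lt_le (s1 s2 : tspan n) : span_lt s1 s2 -> span_le s1 s2.
Proof. by case/andP. Qed.

Lemma le_elem (s1 s2 : tspan n) i : span_le s1 s2 -> elem_in s1 i -> elem_in s2 i.
Proof.
case: s1 => [[a1 l1]|[]] //; case: s2 => [[a2 l2]|[]] //.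
by rewrite le_char => /andP[/forallP h _] hi; apply: (implyP (h i)).
Qed.

Lemma le_vhs (F : finFieldType) (al : 'rV[F]_n) (s1 s2 : tspan n) :
  span_le s1 s2 -> vec_has_span al s1 -> vec_has_span al s2.
Proof.
case: s1 => [[a1 l1]|[]] //; case: s2 => [[a2 l2]|[]] //.
- rewrite le_char => /andP[_ /forallP h] /= /forallP h2; apply/forallP=> i.
  apply/implyP=> hi; exact: (implyP (h i) (implyP (h2 i) hi)).
- move=> _ /eqP ->; apply/forallP=> i; by rewrite mxE eqxx.
Qed.

Lemma clean (F : finFieldType) (al : 'rV[F]_n) (s1 : tspan n) (a l : 'I_n) :
  (forall i, elem_in s1 i -> elem_in (inl (a, l)) i) -> ~~ span_le s1 (inl (a, l)) ->
  vec_has_span al s1 -> forall i, al 0 i != 0 -> ~~ cc a l i.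
Proof.
case: s1 => [[a1 l1]|[]] //; last first.
  by move=> h; have := h a isT; rewrite /= ocE off_self.
move=> ho; rewrite le_char.
have hoi : incl (oc a1 l1) (oc a l) by apply/forallP=> i; apply/implyP; exact: ho.
rewrite hoi /= => /forallPn[j]; rewrite negb_imply => /andP[cj ncj].
have ej : j = a1.
  have : ~~ oc a1 l1 j by apply/negP=> h; move: ncj; rewrite ccE; move: (ho j h) => /=; rewrite ocE; lia.
  rewrite ocE; move: cj; rewrite ccE => cj.
  move=> h; apply: (off_eq n_gt0 (a:=a1)); rewrite off_self; lia.
subst j.
have l10 : nat_of_ord l1 = 0%N.
  case: (posnP l1) => // l1p; exfalso.
  have := ho (pos n_gt0 a1 1); rewrite /= !ocE off_pos; last by have := ltn_ord l1; lia.
  rewrite off_pos2 => /(_ ltac:(lia)).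
  move: ncj; rewrite ccE.
  have hh : (off a a1 + 1 < n + n)%N by have := off_ltn a a1; lia.
  have := off_ltn a a1; rewrite modn2 //; case: ifP => c1; lia.
move=> /forallP hal i hi; have := implyP (hal i) hi.
rewrite ccE l10 leqn0 => /eqP h0.
have -> : i = a1 by apply: (off_eq n_gt0 (a:=a1)); rewrite h0 off_self.
exact: ncj.
Qed.

End Order.

Section Tensor.
Variables (F : finFieldType) (n : nat).
Notation fac_t := (seq (tspan n * 'rV[F]_n)).

Definition def0 : tspan n * 'rV[F]_n := (sEmpty, 0).

Fixpoint vert (fac : fac_t) (g : nat -> F) (i : 'I_n) : 'rV[F]_(tdim (tensor_list fac) i) :=
  match fac return 'rV[F]_(tdim (tensor_list fac) i) with
  | [::] => 0
  | p :: fac' => row_mx (g 0%N *: const_mx 1) (vert fac' (fun j => g j.+1) i)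
  end.

Definition lab (fac : fac_t) (g : nat -> F) : 'rV[F]_n :=
  \sum_(t < size fac) g t *: (nth def0 fac t).2.

Fixpoint vcoef (fac : fac_t) (i : 'I_n) : 'rV[F]_(tdim (tensor_list fac) i) -> nat -> F :=
  match fac return 'rV[F]_(tdim (tensor_list fac) i) -> nat -> F with
  | [::] => fun _ _ => 0
  | p :: fac' => fun v j =>
      match j with
      | 0 => \sum_(k < _) (lsubmx (v : 'rV_(nat_of_bool (elem_in p.1 i) + tdim (tensor_list fac') i))) 0 k
      | j'.+1 => @vcoef fac' i (rsubmx (v : 'rV_(nat_of_bool (elem_in p.1 i) + tdim (tensor_list fac') i))) j'
      end
  end.
Arguments vcoef : clear implicits.

Lemma lab_cons p fac g : lab (p :: fac) g = g 0%N *: p.2 + lab fac (fun j => g j.+1).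
Proof. by rewrite /lab big_ord_recl. Qed.

Lemma rv_bool (b : bool) (x : 'rV[F]_(nat_of_bool b)) : (\sum_(k < _) x 0 k) *: const_mx 1 = x.
Proof.
case: b x => x /=; apply/rowP => k; rewrite ?mxE; last by case: k.
by rewrite big_ord1 mulr1; congr (x _ _); apply: val_inj; case: k => [[]].
Qed.

Lemma scal_bool (b : bool) (x y : F) :
  (x *: (const_mx 1 : 'rV[F]_(nat_of_bool b)) = y *: const_mx 1) <-> (b -> x = y).
Proof.
case: b => /=; split => //.
- by move/rowP/(_ 0); rewrite !mxE !mulr1 => -> .
- by move=> h; rewrite h.
- by move=> _; apply/rowP => -[].
Qed.

Lemma vert_coef fac i v : vert fac (vcoef fac i v) i = v.
Proof.
elim: fac v => [|p fac IH] v /=; first by apply/rowP => -[].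
by rewrite rv_bool IH hsubmxK.
Qed.

Lemma vert_eq fac g h i :
  vert fac g i = vert fac h i <->
  (forall t, (t < size fac)%N -> elem_in (nth def0 fac t).1 i -> g t = h t).
Proof.
elim: fac g h => [|p fac IH] g h /=.
  by split => // _; apply/rowP => -[].
split.
- move/eq_row_mx => [/scal_bool h1 /IH h2] t ht hi.
  case: t ht hi => [|t] /= ht hi; [exact: h1 | exact: h2].
- move=> H; congr row_mx.
  + by apply/scal_bool => hi; exact: (H 0%N).
  + by apply/IH => t ht hi; exact: (H t.+1).
Qed.

Lemma vert_lin fac c g h i :
  vert fac (fun j => c * g j + h j) i = c *: vert fac g i + vert fac h i.
Proof.
elim: fac g h => [|p fac IH] g h /=; first by rewrite scaler0 addr0.
by rewrite IH scale_row_mx add_row_mx scalerDl scalerA.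
Qed.

Lemma vert0 fac i : vert fac (fun _ => 0) i = 0.
Proof.
elim: fac => [|p fac IH] //=; by rewrite IH scale0r row_mx0.
Qed.

Lemma lab_lin fac c g h :
  lab fac (fun j => c * g j + h j) = c *: lab fac g + lab fac h.
Proof.
rewrite /lab scaler_sumr -big_split /=; apply: eq_bigr => t _.
by rewrite scalerDl scalerA.
Qed.

Lemma lab0 fac : lab fac (fun _ => 0) = 0.
Proof. by rewrite /lab big1 // => t _; rewrite scale0r. Qed.

Lemma edgeP fac i v a w :
  (v, a, w) \in tedges (tensor_list fac) i <->
  exists g, [/\ v = vert fac g i, w = vert fac g (nxt i) & a = lab fac g 0 i].
Proof.
elim: fac v a w => [|p fac IH] v a w /=.
  rewrite inE; split.
    move/eqP=> [_ -> _]; exists (fun _ => 0); split; try by apply/rowP => -[].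
    by rewrite /lab big_ord0 mxE.
  move=> [g [_ _ ->]]; rewrite /lab big_ord0 mxE.
  by apply/eqP; congr (_, _, _); apply/rowP => -[].
split.
- case/imset2P => e e' /imsetP[c _ ->] /= he' [-> -> ->].
  have [g [e1 e2 e3]] := (IH e'.1.1 e'.1.2 e'.2).1 ltac:(by case: e' he' => [[]]).
  exists (fun j => if j is j'.+1 then g j' else c); split => //=.
  + by rewrite -e1.
  + by rewrite -e2.
  + by rewrite lab_cons !mxE e3.
- move=> [g [-> -> ->]].
  have he : (g 0%N *: (const_mx 1 : 'rV_(nat_of_bool (elem_in p.1 i))), g 0%N * p.2 0 i,
             g 0%N *: (const_mx 1 : 'rV_(nat_of_bool (elem_in p.1 (nxt i))))) \in
            tedges (elem_trellis p.2 p.1) i.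
    by apply/imsetP; exists (g 0%N).
  have he' := (IH (vert fac (fun j => g j.+1) i) (lab fac (fun j => g j.+1) 0 i)
                  (vert fac (fun j => g j.+1) (nxt i))).2 (ex_intro _ _ (And3 erefl erefl erefl)).
  apply/imset2P; exists (g 0%N *: (const_mx 1 : 'rV_(nat_of_bool (elem_in p.1 i))), g 0%N * p.2 0 i,
             g 0%N *: (const_mx 1 : 'rV_(nat_of_bool (elem_in p.1 (nxt i))))) (vert fac (fun j => g j.+1) i, lab fac (fun j => g j.+1) 0 i, vert fac (fun j => g j.+1) (nxt i)) => //.
  by rewrite lab_cons !mxE.
Qed.

End Tensor.
Arguments vcoef {F n} fac i.

Section Cycles.
Variables (F : finFieldType) (n : nat) (n_gt0 : (0 < n)%N).
Notation fac_t := (seq (tspan n * 'rV[F]_n)).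

Definition sa (s : tspan n) : 'I_n := if s is inl (a, _) then a else Ordinal n_gt0.
Definition sl (s : tspan n) : nat := if s is inl (_, l) then nat_of_ord l else n.-1.

Lemma sl_lt s : (sl s < n)%N.
Proof. case: s => [[a l]|b] /=; [exact: ltn_ord | lia]. Qed.

Lemma elem_pos s d : s != inr false -> (0 < d <= sl s)%N -> elem_in s (pos n_gt0 (sa s) d).
Proof.
case: s => [[a l]|[]] //= _ hd.
by rewrite ocE off_pos //; have := ltn_ord l; lia.
Qed.

Lemma elem_off s i : elem_in s i -> (off (sa s) i <= sl s)%N.
Proof.
case: s => [[a l]|[]] //=; first by rewrite ocE => /andP[].
by move=> _; have := off_ltn n_gt0 (Ordinal n_gt0) i; lia.
Qed.

Lemma vhs_off (al : 'rV[F]_n) s i : vec_has_span al s -> al 0 i != 0 -> (off (sa s) i <= sl s)%N.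
Proof.
case: s => [[a l]|[]] /=.
- by move=> /forallP h hi; move: (implyP (h i) hi); rewrite ccE.
- by move=> _ _; have := off_ltn n_gt0 (Ordinal n_gt0) i; lia.
- by move/eqP => ->; rewrite mxE eqxx.
Qed.

Lemma tcycleP (fac : fac_t) (v : forall i, 'rV[F]_(tdim (tensor_list fac) i)) al :
  (forall p, p \in fac -> vec_has_span p.2 p.1) ->
  is_cycle (tensor_list fac) v al <->
  exists g, (forall i, v i = vert fac g i) /\ al = lab fac g.
Proof.
move=> hspan; split; last first.
  move=> [g [hv ->]]; apply/forallP => i; apply/edgeP; exists g; by rewrite !hv.
move=> /forallP hc.
have /fin_all_exists [G hG] : forall i, exists g,
   [/\ v i = vert fac g i, v (nxt i) = vert fac g (nxt i) & al 0 i = lab fac g 0 i].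
  by move=> i; apply/edgeP; exact: hc.
pose st t := (nth (def0 F n) fac t).1.
pose g t := G (sa (st t)) t.
have chain : forall t d, (t < size fac)%N -> st t != inr false -> (d <= sl (st t))%N ->
   G (pos n_gt0 (sa (st t)) d) t = g t.
  move=> t d ht hne; elim: d => [|d IH] hd.
    by rewrite pos0.
  rewrite -IH; last by lia.
  have [_ h2 _] := hG (pos n_gt0 (sa (st t)) d).
  have [h1 _ _] := hG (pos n_gt0 (sa (st t)) d.+1).
  rewrite nxt_pos h1 in h2.
  have := (vert_eq _ _ _ _).1 h2 t ht; apply.
  by apply: elem_pos => //; lia.
have key : forall t i, (t < size fac)%N -> st t != inr false -> (off (sa (st t)) i <= sl (st t))%N ->
    G i t = g t.
  move=> t i ht hne hd; rewrite -(chain t (off (sa (st t)) i)) //.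
  by rewrite pos_off.
exists g; split.
- move=> i; have [-> _ _] := hG i; apply/vert_eq => t ht hi.
  apply: key => //; last exact: elem_off.
  by apply/negP => /eqP e; move: hi; rewrite -/(st t) e.
- apply/rowP => i; have [_ _ ->] := hG i.
  rewrite /lab !summxE; apply: eq_bigr => t _; rewrite !mxE.
  have [z|nz] := eqVneq ((nth (def0 F n) fac t).2 0 i) 0; first by rewrite z !mulr0.
  have hv : vec_has_span (nth (def0 F n) fac t).2 (st t) by apply: hspan; exact: mem_nth.
  congr (_ * _); apply: key => //.
  + apply/negP => /eqP e; move: hv; rewrite e /= => /eqP h; by move: nz; rewrite h mxE eqxx.
  + exact: vhs_off hv nz.
Qed.

End Cycles.

Section LemmaA.
Variables (F : finFieldType) (n : nat) (n_gt0 : (0 < n)%N).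
Notation fac_t := (seq (tspan n * 'rV[F]_n)).

Definition Ysum (fac : fac_t) (P : pred (tspan n)) : {vspace 'rV[F]_n} :=
  (\sum_(t < size fac | P (nth (def0 F n) fac t).1) <[(nth (def0 F n) fac t).2]>)%VS.

Lemma Ysum_lab (fac : fac_t) (P : pred (tspan n)) (g : nat -> F) :
  (forall t : 'I_(size fac), g (nat_of_ord t) != 0 -> P (nth (def0 F n) fac t).1) -> lab fac g \in Ysum fac P.
Proof.
move=> h; rewrite /lab (bigID (fun t : 'I_(size fac) => P (nth (def0 F n) fac t).1)) /=.
rewrite [X in _ + X]big1 ?addr0; last first.
  move=> t ht; have [z|nz] := eqVneq (g t) 0; first by rewrite z scale0r.
  by move: ht; rewrite h.
by apply: memv_sumr => t _; apply: memvZ; apply: memv_line.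
Qed.

Lemma cycle_span_transfer (T1 T2 : trellis F n) (v : forall i, 'rV[F]_(tdim T1 i)) (w : forall i, 'rV[F]_(tdim T2 i)) al (s : tspan n) :
  (forall i, v i = 0 -> w i = 0) -> cycle_has_span T1 v al s -> cycle_has_span T2 w al s.
Proof.
move=> h; case: s => [[a l]|[]] //=.
- move=> /andP[/forallP h1 h2]; rewrite h2 andbT; apply/forallP => i.
  apply/implyP => hw; apply: (implyP (h1 i)); apply/eqP => e; move: hw; by rewrite (h i e) eqxx.
- move=> /andP[/forallP h1 h2]; rewrite h2 andbT; apply/forallP => i.
  by apply/eqP; apply: h; apply/eqP; exact: h1.
Qed.

Lemma lemmaA (fac : fac_t) (s : tspan n) :
  (forall p, p \in fac -> vec_has_span p.2 p.1) ->
  Cspan (tensor_list fac) s = Ysum fac (fun s' => span_le s' s).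
Proof.
move=> hspan; apply: subv_anti; apply/andP; split.
- apply/span_subvP => al; rewrite mem_enum inE => /existsP[v /andP[/(tcycleP n_gt0 _ _ hspan)[g [hv hal]] hs]].
  subst al.
  case: s hs => [[a l]|[]] hs; last first.
  + move: hs => /= /andP[_ /eqP ->]; exact: mem0v.
  + by apply: Ysum_lab => t _; case: ((nth (def0 F n) fac t).1) => [[? ?]|[]].
  have hinc : forall t : 'I_(size fac), g t != 0 ->
      forall i, elem_in (nth (def0 F n) fac t).1 i -> elem_in (inl (a, l)) i.
    move=> t gt i hi /=; apply/negPn/negP => hno.
    move: hs => /= /andP[/forallP h1 _].
    have : v i = 0 by apply/eqP; apply/negPn/negP => hh; move: (implyP (h1 i) hh); rewrite (negbTE hno).
    rewrite hv -(vert0 fac i) => /vert_eq /(_ t (ltn_ord t) hi) e.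
    by move: gt; rewrite e eqxx.
  pose Pl := fun t : 'I_(size fac) => span_le (nth (def0 F n) fac t).1 (inl (a, l)).
  have eAR : lab fac g = \sum_(t | Pl t) g t *: (nth (def0 F n) fac t).2 +
                        \sum_(t | ~~ Pl t) g t *: (nth (def0 F n) fac t).2 by rewrite /lab (bigID Pl).
  rewrite eAR in hs *.
  set A := \sum_(t | Pl t) _; set R := \sum_(t | ~~ Pl t) _.
  have hA : A \in Ysum fac (fun s' => span_le s' (inl (a, l))).
    by apply: memv_sumr => t _; apply: memvZ; apply: memv_line.
  suff -> : R = 0 by rewrite addr0.
  have hvA : forall i, ~~ cc a l i -> A 0 i = 0.
    move=> i hi; rewrite /A summxE big1 // => t ht; rewrite mxE.
    have hv2 : vec_has_span (nth (def0 F n) fac t).2 (inl (a, l)).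
      exact: (le_vhs n_gt0 ht (hspan _ (mem_nth _ (ltn_ord t)))).
    move: hv2 => /= /forallP /(_ i); case: eqP => [->|_] /=; first by rewrite mulr0.
    by rewrite (negbTE hi).
  apply/rowP => i; rewrite mxE.
  case hc: (cc a l i).
  + rewrite /R summxE big1 // => t ht; rewrite mxE.
    have [z|nz] := eqVneq (g t) 0; first by rewrite z mul0r.
    have [z|nz2] := eqVneq ((nth (def0 F n) fac t).2 0 i) 0; first by rewrite z mulr0.
    have hvt := hspan _ (mem_nth (def0 F n) (ltn_ord t)).
    by move: (clean n_gt0 (hinc t nz) ht hvt nz2); rewrite hc.
  + move: hs => /= /andP[_ /forallP h2]; have := h2 i.
    by rewrite hc implybF negbK mxE hvA ?hc // add0r => /eqP.
- apply/subv_sumP => t ht; rewrite -memvE.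
  have [z|nz] := eqVneq (nth (def0 F n) fac t).2 0; first by rewrite z mem0v.
  apply: memv_span; rewrite mem_enum inE.
  pose g j := if j == nat_of_ord t then (1 : F) else 0.
  have hlab : lab fac g = (nth (def0 F n) fac t).2.
    rewrite /lab (bigD1 t) //= big1 ?addr0 /g ?eqxx ?scale1r // => j hj.
    by rewrite ifN ?scale0r.

  apply/existsP; exists [ffun i => vert fac g i]; apply/andP; split.
    by apply/(tcycleP n_gt0 _ _ hspan); exists g; split => [i|//]; rewrite ffunE.
  have hvt : vec_has_span (nth (def0 F n) fac t).2 (nth (def0 F n) fac t).1.
    apply: hspan; exact: mem_nth.
  rewrite -hlab.
  case: s ht => [[a l]|[]] ht /=; last first.
  + exfalso; move: nz; have := le_antisym n_gt0 ht isT => e; move: hvt; rewrite e /= => /eqP ->.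
    by rewrite eqxx.
  + by [].
  apply/andP; split; last first.
    have := le_vhs n_gt0 ht hvt; by rewrite hlab.
  apply/forallP => i; apply/implyP; rewrite ffunE => hne.
  apply/negPn/negP => hno; move: hne; rewrite -(vert0 fac i).
  suff -> : vert fac g i = vert fac (fun _ => 0) i by rewrite eqxx.
  apply/vert_eq => j hj hi; rewrite /g; case: eqP => // ej; exfalso.
  have : elem_in (inl (a, l)) i.
    by apply: (le_elem n_gt0 ht); move: hi; rewrite ej.
  by rewrite /= (negbTE hno).
Qed.

End LemmaA.

Section Invariance.
Variables (F : finFieldType) (n : nat) (n_gt0 : (0 < n)%N).
Notation fac_t := (seq (tspan n * 'rV[F]_n)).

Lemma equiv_sym (T1 T2 : trellis F n) : trellis_equiv T1 T2 -> trellis_equiv T2 T1.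
Proof.
move=> [f [hb hf]].
have /fin_all_exists [g hg] : forall i, exists g : 'rV[F]_(tdim T2 i) -> 'rV[F]_(tdim T1 i),
    cancel (f i) g /\ cancel g (f i).
  by move=> i; case: (hb i) => g h1 h2; exists g.
exists g; split.
  by move=> i; exists (f i); [exact: (hg i).2 | exact: (hg i).1].
by move=> i v a w; rewrite hf !(hg _).2.
Qed.

Lemma equiv_trans (T1 T2 T3 : trellis F n) :
  trellis_equiv T1 T2 -> trellis_equiv T2 T3 -> trellis_equiv T1 T3.
Proof.
move=> [f [hb hf]] [g [hb' hg]]; exists (fun i x => g i (f i x)); split.
  by move=> i; apply: bij_comp.
by move=> i v a w; rewrite hf hg.
Qed.

Lemma cycle_lin (T : trellis F n) (v w : forall i, 'rV[F]_(tdim T i)) al bl c :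
  is_linear T -> is_cycle T v al -> is_cycle T w bl ->
  is_cycle T (fun i => c *: v i + w i) (c *: al + bl).
Proof.
move=> hl /forallP hv /forallP hw; apply/forallP => i.
have := (hl i).2 c _ _ (hv i) (hw i); by rewrite /= !mxE.
Qed.

Lemma cycle0 (T : trellis F n) : is_linear T -> is_cycle T (fun _ => 0) 0.
Proof. by move=> hl; apply/forallP => i; rewrite mxE; exact: (hl i).1. Qed.

Lemma cycle_map (T1 T2 : trellis F n) f v al :
  (forall i v a w, ((v, a, w) \in tedges T1 i) = ((f i v, a, f (nxt i) w) \in tedges T2 i)) ->
  is_cycle T1 v al = is_cycle T2 (fun i => f i (v i)) al.
Proof. by move=> hf; apply: eq_forallb => i; rewrite hf. Qed.

Lemma Cspan_equiv (T : trellis F n) (fac : fac_t) s :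
  is_linear T -> trellis_equiv T (tensor_list fac) ->
  (forall p, p \in fac -> vec_has_span p.2 p.1) ->
  Cspan T s = Cspan (tensor_list fac) s.
Proof.
move=> hl [f [hb hf]] hspan; rewrite /Cspan.
suff -> : [set al : 'rV[F]_n | [exists v : {dffun forall i, 'rV[F]_(tdim T i)},
                    is_cycle T v al && cycle_has_span T v al s]] =
          [set al : 'rV[F]_n | [exists v : {dffun forall i, 'rV[F]_(tdim (tensor_list fac) i)},
                    is_cycle (tensor_list fac) v al && cycle_has_span (tensor_list fac) v al s]] by [].
apply/setP => al; rewrite !inE; apply/existsP/existsP.
- move=> [v /andP[hc hs]].
  have c1 : is_cycle (tensor_list fac) (fun i => f i (v i)) al by rewrite -(@cycle_map _ _ f v al hf).
  have c0 : is_cycle (tensor_list fac) (fun i => f i 0) 0.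
    by rewrite -(@cycle_map _ _ f (fun _ => 0) 0 hf); exact: cycle0.
  have [g1 [hv1 hl1]] := (tcycleP n_gt0 _ _ hspan).1 c1.
  have [g0 [hv0 hl0]] := (tcycleP n_gt0 _ _ hspan).1 c0.
  exists [ffun i => vert fac (fun j => (-1) * g0 j + g1 j) i]; apply/andP; split.
    apply/(tcycleP n_gt0 _ _ hspan); exists (fun j => (-1) * g0 j + g1 j); split.
      by move=> i; rewrite ffunE.
    by rewrite lab_lin -hl0 -hl1 scaler0 add0r.
  apply: cycle_span_transfer hs => i hvi; rewrite ffunE vert_lin -hv0 -hv1 hvi.
  by rewrite scaleN1r addNr.
- move=> [w /andP[hc hs]].
  have /fin_all_exists [g hg] : forall i, exists g : 'rV[F]_(tdim (tensor_list fac) i) -> 'rV[F]_(tdim T i),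
      cancel (f i) g /\ cancel g (f i).
    by move=> i; case: (hb i) => g h1 h2; exists g.
  have c1 : is_cycle T (fun i => g i (w i)) al.
    by rewrite (@cycle_map _ _ f (fun i => g i (w i)) al hf); apply: etrans hc; apply: eq_forallb => i; rewrite !(hg _).2.
  have c0 : is_cycle T (fun i => g i 0) 0.
    rewrite (@cycle_map _ _ f (fun i => g i 0) 0 hf); apply: etrans (_ : is_cycle (tensor_list fac) (fun _ => 0) 0 = true).
      by apply: eq_forallb => i; rewrite !(hg _).2.
    apply/(tcycleP n_gt0 _ _ hspan); exists (fun _ => 0); split; last by rewrite lab0.
    by move=> i; rewrite vert0.
  have c2 := cycle_lin (-1) hl c0 c1.
  exists [ffun i => (-1) *: g i 0 + g i (w i)]; apply/andP; split.
    move: c2; rewrite scaler0 add0r; apply: etrans; apply: eq_forallb => i; by rewrite !ffunE.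
  apply: cycle_span_transfer hs => i hwi; rewrite ffunE hwi.
  by rewrite scaleN1r addNr.
Qed.

End Invariance.

Section EquivMx.
Variables (F : finFieldType) (n : nat).
Notation fac_t := (seq (tspan n * 'rV[F]_n)).
Variables (k : nat).

Definition fn (y : 'rV[F]_k) (j : nat) : F := \sum_(t < k | nat_of_ord t == j) y 0 t.
Definition rw (g : nat -> F) : 'rV[F]_k := \row_(t < k) g t.

Lemma fnE y (t : 'I_k) : fn y t = y 0 t.
Proof.
rewrite /fn (big_pred1 t) // => u; by rewrite /= -(inj_eq val_inj).
Qed.

Lemma fn_rw g (t : 'I_k) : fn (rw g) t = g t.
Proof. by rewrite fnE mxE. Qed.

Lemma lab_ext (fac : fac_t) g h : (forall t, (t < size fac)%N -> g t = h t) -> lab fac g = lab fac h.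
Proof. by move=> e; apply: eq_bigr => t _; rewrite e. Qed.

Lemma vert_ext (fac : fac_t) g h i : (forall t, (t < size fac)%N -> g t = h t) -> vert fac g i = vert fac h i.
Proof. by move=> e; apply/vert_eq => t ht _; exact: e. Qed.

Lemma lab_k (fac : fac_t) g : size fac = k -> lab fac g = \sum_(t < k) g t *: (nth (def0 F n) fac t).2.
Proof.
move=> hk; rewrite /lab -(big_mkord xpredT (fun t => g t *: (nth (def0 F n) fac t).2)) hk.
by rewrite big_mkord.
Qed.

Variables (fac fac0 : fac_t) (hk : size fac = k) (hk0 : size fac0 = k) (Phi : 'M[F]_k).
Hypothesis hlabP : forall t : 'I_k, \sum_(u < k) Phi t u *: (nth (def0 F n) fac0 u).2 = (nth (def0 F n) fac t).2.
Hypothesis hcov : forall i (t u : 'I_k), Phi t u != 0 -> elem_in (nth (def0 F n) fac0 u).1 i ->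
  elem_in (nth (def0 F n) fac t).1 i.
Hypothesis hunit : Phi \in unitmx.
Hypothesis hcovinv : forall i (y : 'rV[F]_k),
  (forall u : 'I_k, elem_in (nth (def0 F n) fac0 u).1 i -> (y *m Phi) 0 u = 0) ->
  forall t : 'I_k, elem_in (nth (def0 F n) fac t).1 i -> y 0 t = 0.

Definition Tg (g : nat -> F) : nat -> F := fn (rw g *m Phi).

Lemma lab_Tg g : lab fac0 (Tg g) = lab fac g.
Proof.
rewrite (lab_k _ hk0) (lab_k _ hk) /Tg.
under eq_bigr do rewrite fnE mxE scaler_suml.
rewrite exchange_big /=; apply: eq_bigr => t _.
rewrite -hlabP scaler_sumr; apply: eq_bigr => u _.
by rewrite mxE scalerA.
Qed.

Lemma vertTg_eq g h i : (forall t, (t < size fac)%N -> elem_in (nth (def0 F n) fac t).1 i -> g t = h t) ->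
  vert fac0 (Tg g) i = vert fac0 (Tg h) i.
Proof.
move=> e; apply/vert_eq => u hu hi; rewrite hk0 in hu.
rewrite /Tg (fnE _ (Ordinal hu)) (fnE _ (Ordinal hu)) !mxE.
apply: eq_bigr => t _; rewrite !mxE.
have [z|nz] := eqVneq (Phi t (Ordinal hu)) 0; first by rewrite z !mulr0.
by rewrite e // ?hk // (hcov nz hi).
Qed.

Definition Fm i (v : 'rV[F]_(tdim (tensor_list fac) i)) : 'rV[F]_(tdim (tensor_list fac0) i) :=
  vert fac0 (Tg (vcoef fac i v)) i.

Lemma Fm_vert g i : Fm (vert fac g i) = vert fac0 (Tg g) i.
Proof.
apply: vertTg_eq => t ht hi.
have := (vert_eq fac (vcoef fac i (vert fac g i)) g i).1 (vert_coef _); apply => //.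
Qed.

Lemma Fm_inj i : injective (@Fm i).
Proof.
move=> v v' e.
rewrite -(vert_coef v) -(vert_coef v').
apply/vert_eq => t ht hi; rewrite hk in ht.
suff H : (rw (vcoef fac i v) - rw (vcoef fac i v')) 0 (Ordinal ht) = 0.
  by move: H; rewrite !mxE; move/eqP; rewrite subr_eq0 => /eqP.
apply: (hcovinv (t := Ordinal ht) _ hi).
move=> u hu; rewrite mulmxBl mxE.
move: e; rewrite /Fm => /vert_eq /(_ u); rewrite hk0 => /(_ (ltn_ord u) hu).
rewrite /Tg !fnE => e1.
have -> : (- (rw (vcoef fac i v') *m Phi)) 0 u = - ((rw (vcoef fac i v') *m Phi) 0 u) by rewrite [LHS]mxE.
by rewrite e1 subrr.
Qed.

Definition Ginv (g0 : nat -> F) : nat -> F := fn (rw g0 *m invmx Phi).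

Lemma Tg_Ginv g0 t : (t < k)%N -> Tg (Ginv g0) t = g0 t.
Proof.
move=> ht; rewrite /Tg (fnE _ (Ordinal ht)).
have -> : rw (Ginv g0) = rw g0 *m invmx Phi.
  by apply/rowP => u; rewrite mxE /Ginv fnE.
by rewrite -mulmxA mulVmx // mulmx1 mxE.
Qed.

Lemma equiv_of_mx : trellis_equiv (tensor_list fac) (tensor_list fac0).
Proof.
exists Fm; split.
  move=> i; exists (fun v0 => vert fac (Ginv (vcoef fac0 i v0)) i).
    move=> v; apply: Fm_inj; rewrite Fm_vert -{2}(vert_coef (Fm v)).
    by apply: vert_ext => t ht; rewrite Tg_Ginv // -hk0.
  move=> v0; rewrite Fm_vert -{2}(vert_coef v0).
  by apply: vert_ext => t ht; rewrite Tg_Ginv // -hk0.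
move=> i v a w; apply/idP/idP.
- move/edgeP => [g [-> -> ->]]; apply/edgeP; exists (Tg g).
  by rewrite !Fm_vert lab_Tg.
- move/edgeP => [g0 [e1 e2 e3]]; apply/edgeP; exists (Ginv g0).
  have hv : forall j, vert fac0 (Tg (Ginv g0)) j = vert fac0 g0 j.
    by move=> j; apply: vert_ext => t ht; rewrite Tg_Ginv // -hk0.
  split.
  + by apply: Fm_inj; rewrite Fm_vert hv.
  + by apply: Fm_inj; rewrite Fm_vert hv.
  + rewrite e3 -lab_Tg.
    have -> // : lab fac0 (Tg (Ginv g0)) = lab fac0 g0.
    by apply: lab_ext => t ht; rewrite Tg_Ginv // -hk0.
Qed.

End EquivMx.

Section Greedy.
Variables (F : fieldType) (V : vectType F).

Lemma greedy (A R : {vspace V}) (es ds0 : seq V) :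
  (R <= A)%VS -> {subset es <= A} -> {subset ds0 <= A} -> free ds0 ->
  (A <= <<ds0>> + R + <<es>>)%VS -> (size ds0 + size es)%N = \dim A ->
  exists ds : seq V, [/\ size ds = size es, {subset ds <= A},
     (forall j, (j < size es)%N -> nth 0 ds j - nth 0 es j \in R) & free (ds0 ++ ds)].
Proof.
elim: es ds0 => [|e es IH] ds0 hRA hes hds0 hfree hA hsz.
  by exists [::]; split => //; rewrite cats0.
have heA : e \in A by apply: hes; rewrite inE eqxx.
have [d [hdA hde hd0]] : exists d, [/\ d \in A, d - e \in R & d \notin <<ds0>>%VS].
  have [ein|eout] := boolP (e \in <<ds0>>%VS); last first.
    by exists e; rewrite subrr mem0v.
  have [sR|/subvPn [r rR rout]] := boolP (R <= <<ds0>>)%VS.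
    exfalso.
    have hR : (R <= <<ds0>> + <<es>>)%VS := subv_trans sR (addvSl _ _).
    have hd : (<<ds0>> <= <<ds0>> + <<es>>)%VS := addvSl _ _.
    have he : (<<e :: es>> <= <<ds0>> + <<es>>)%VS.
      rewrite span_cons subv_add addvSr andbT.
      by apply: subv_trans (addvSl _ _); rewrite -memvE.
    have h1 : (A <= <<ds0>> + <<es>>)%VS.
      by apply: subv_trans hA _; rewrite !subv_add hd hR he.
    have := dimvS h1; have := dim_span ds0; have := dim_span es.
    have := (dimv_add_leqif <<ds0>>%VS <<es>>%VS).1.
    move: hsz => /= hsz; lia.
  exists (e + r); split.
  - by apply: memvD => //; apply: (subvP hRA).
  - by rewrite addrC addKr.
  - apply/negP => hin; move: rout; rewrite (_ : r = (e + r) - e) ?memvB //.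
    by rewrite addrC addKr.
have hA' : (A <= <<d :: ds0>> + R + <<es>>)%VS.
  apply: subv_trans hA _.
  have hds : (<<ds0>> <= <<d :: ds0>>)%VS by rewrite span_cons addvSr.
  have hdd : d \in <<d :: ds0>>%VS by rewrite span_cons; apply: (subvP (addvSl _ _)); exact: memv_line.
  rewrite !subv_add; apply/andP; split; first (apply/andP; split).
  - exact: subv_trans hds (subv_trans (addvSl _ R) (addvSl _ _)).
  - exact: subv_trans (addvSr _ _) (addvSl _ _).
  - rewrite span_cons subv_add; apply/andP; split; last by rewrite addvSr.
    rewrite -memvE (_ : e = d - (d - e)); last by rewrite opprB addrC subrK.
    apply: memvB; first by apply: (subvP (addvSl _ _)); apply: (subvP (addvSl _ _)); exact: hdd.
    by apply: (subvP (addvSl _ _)); apply: (subvP (addvSr _ _)).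
have hsub : {subset d :: ds0 <= A}.
  by move=> x; rewrite inE => /orP[/eqP ->|]; [exact: hdA | exact: hds0].
have hfr : free (d :: ds0) by rewrite free_cons hd0 hfree.
have hsz' : (size (d :: ds0) + size es)%N = \dim A by move: hsz => /=; rewrite addSn addnS.
have hes' : {subset es <= A} by move=> x hx; apply: hes; rewrite inE hx orbT.
have [ds [h1 h2 h3 h4]] := IH (d :: ds0) hRA hes' hsub hfr hA' hsz'.
exists (d :: ds); split => /=.
+ by rewrite h1.
+ by move=> x; rewrite inE => /orP[/eqP ->|]; [exact: hdA | exact: h2].
+ by move=> [|j] hj //=; apply: h3.
+ have hp : perm_eq ([:: d] ++ ds0 ++ ds) (ds0 ++ [:: d] ++ ds) by apply/permPl; exact: perm_catCA.
  by rewrite -(perm_free hp).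
Qed.

End Greedy.

Section Lines.
Variables (F : fieldType) (V : vectType F) (I : finType).

Lemma memv_sum_lines (P : pred I) (w : I -> V) y :
  y \in (\sum_(i | P i) <[w i]>)%VS -> exists c : I -> F, y = \sum_(i | P i) c i *: w i.
Proof.
move/memv_sumP => [vs hvs ->].
have /fin_all_exists [c hc] : forall i, exists c : F, P i -> vs i = c *: w i.
  move=> i; case: (boolP (P i)) => pi; last by exists 0.
  by have /vlineP [c ->] := hvs i pi; exists c.
by exists c; apply: eq_bigr => i pi; rewrite hc.
Qed.

Lemma sum_lines_mem (P : pred I) (w : I -> V) (c : I -> F) :
  \sum_(i | P i) c i *: w i \in (\sum_(i | P i) <[w i]>)%VS.
Proof. by apply: memv_sumr => i _; apply: memvZ; exact: memv_line. Qed.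

End Lines.

Section Units.
Variables (F : fieldType) (k : nat).
Definition unitv (v : 'I_k) : 'rV[F]_k := delta_mx 0 v.

Lemma span_units_entry (X : seq 'I_k) y u : u \notin X ->
  y \in <<[seq unitv v | v <- X]>>%VS -> y 0 u = 0 :> F.
Proof.
move=> hu hin; rewrite (coord_span (X := in_tuple [seq unitv v | v <- X]) hin) summxE big1 // => i _.
have hi : (i < size X)%N by rewrite -(size_map (@unitv) X) ltn_ord.
rewrite mxE (nth_map u _ _ hi) /unitv mxE eqxx /=.
case: eqP => [e|]; last by rewrite mulr0.
by move: hu; rewrite e mem_nth.
Qed.

Lemma free_units (X : seq 'I_k) : uniq X -> free [seq unitv v | v <- X] :> bool.
Proof.
elim: X => [|u X IH] /=; first by rewrite /free span_nil dimv0.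
move=> /andP[hu hX]; rewrite free_cons IH // andbT; apply/negP => hin.
by have := span_units_entry hu hin; rewrite /unitv mxE !eqxx /= => /eqP; rewrite oner_eq0.
Qed.

End Units.

Section Build.
Variables (F : finFieldType) (n : nat) (n_gt0 : (0 < n)%N) (k : nat).
Variables (s s0 : 'I_k -> tspan n) (al be : 'I_k -> 'rV[F]_n).

Local Notation uv := (@unitv F k).
Definition Y0 (P : pred (tspan n)) : {vspace 'rV[F]_n} := (\sum_(u < k | P (s0 u)) <[be u]>)%VS.
Definition Ya (P : pred (tspan n)) : {vspace 'rV[F]_n} := (\sum_(t < k | P (s t)) <[al t]>)%VS.
Definition B0 : 'M[F]_(k, n) := \matrix_(u, j) be u 0 j.
Definition rhoL : 'Hom('rV[F]_k, 'rV[F]_n) := linfun (mulmxr B0).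

Lemma rhoLE y : rhoL y = \sum_(u < k) y 0 u *: be u.
Proof.
rewrite lfunE /= /mulmxr; apply/rowP => j; rewrite !mxE summxE.
by apply: eq_bigr => u _; rewrite !mxE.
Qed.

Lemma rhoL_unit u : rhoL (uv u) = be u.
Proof.
rewrite rhoLE (bigD1 u) //= big1 ?addr0; first by rewrite /unitv mxE !eqxx scale1r.
by move=> v hv; rewrite /unitv mxE eqxx /= (negbTE hv) scale0r.
Qed.

Hypothesis HL1 : forall t, al t \in (Y0 (pred1 (s t)) + Y0 (fun x => span_lt x (s t)))%VS.
Hypothesis HL2 : forall sp, (Y0 (pred1 sp) <= Ya (pred1 sp) + Y0 (fun x => span_lt x sp))%VS.
Hypothesis Hcnt : forall sp, #|[pred t | s t == sp]| = #|[pred u | s0 u == sp]|.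

Lemma class_rows sp : exists rows : 'I_k -> 'rV[F]_k,
  [/\ forall t, s t = sp -> rhoL (rows t) = al t,
      forall t u, s t = sp -> rows t 0 u != 0 -> s0 u = sp \/ span_lt (s0 u) sp
    & forall y : 'rV[F]_k, (forall u, s0 u = sp -> \sum_(t | s t == sp) y 0 t * rows t 0 u = 0) ->
        forall t, s t = sp -> y 0 t = 0].
Proof.
pose Jl := enum [pred u | s0 u == sp]; pose Il := enum [pred t | s t == sp].
pose VJ := (<<[seq uv v | v <- Jl]>>)%VS.
pose Z := Y0 (fun x => span_lt x sp).
pose R := (VJ :&: rhoL @^-1: Z)%VS.
have f1 : forall y u, y \in VJ -> s0 u != sp -> y 0 u = 0.
  move=> y u hy hu; apply: span_units_entry hy; by rewrite mem_enum.
have f2 : forall u, s0 u == sp -> uv u \in VJ.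
  by move=> u hu; apply: memv_span; apply: map_f; rewrite mem_enum.
have hdim : \dim VJ = size Jl.
  apply/eqP; rewrite -(size_map (uv) Jl); apply: free_units; exact: enum_uniq.
have /fin_all_exists [lift hlift] : forall t, exists l, s t == sp -> l \in VJ /\ rhoL l - al t \in Z.
  move=> t; case: (boolP (s t == sp)) => ht; last by exists 0.
  have := HL1 t; rewrite (eqP ht) => /memv_addP [a ha [z hz e]].
  have [c ec] := memv_sum_lines ha.
  exists (\sum_(u | s0 u == sp) c u *: uv u) => _; split.
    by apply: rpred_sum => u hu; apply: memvZ; apply: f2.
  rewrite linear_sum /=.
  have -> : \sum_(u | s0 u == sp) rhoL (c u *: uv u) = a.
    by rewrite ec; apply: eq_bigr => u _; rewrite linearZ /= rhoL_unit.
  by rewrite e opprD addrA subrr add0r rpredN.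
pose es := [seq lift t | t <- Il].
have hes : {subset es <= VJ}.
  by move=> x /mapP [t ht ->]; move: ht; rewrite mem_enum => ht; case: (hlift t ht).
have hRA : (R <= VJ)%VS by exact: capvSl.
have hA : (VJ <= <<[::]>> + R + <<es>>)%VS.
  apply/span_subvP => x0 /mapP [u hu ->]; move: hu; rewrite mem_enum /= => hu.
  have hb : be u \in Y0 (pred1 sp).
    by rewrite /Y0 (bigD1 u) //=; apply: (subvP (addvSl _ _)); exact: memv_line.
  have := subvP (HL2 sp) _ hb; move=> /memv_addP [a ha [z hz e]].
  have [d ed] := memv_sum_lines ha.
  pose x := \sum_(t | s t == sp) d t *: lift t.
  have hx : x \in <<es>>%VS.
    apply: rpred_sum => t ht; apply: memvZ; apply: memv_span; apply: map_f.
    by rewrite mem_enum.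
  have hxR : uv u - x \in R.
    rewrite memv_cap -memv_preim; apply/andP; split.
      apply: memvB; first exact: f2.
      by apply: rpred_sum => t ht; apply: memvZ; case: (hlift t ht).
    rewrite linearB /= rhoL_unit e ed /x linear_sum /=.
    have -> : \sum_(t | s t == sp) rhoL (d t *: lift t) =
              \sum_(t | s t == sp) d t *: al t + \sum_(t | s t == sp) d t *: (rhoL (lift t) - al t).
      rewrite -big_split /=; apply: eq_bigr => t _.
      by rewrite linearZ /= -scalerDr addrC subrK.
    set S1 := \sum_(t | s t == sp) d t *: al t.
    set S2 := \sum_(t | s t == sp) d t *: (rhoL (lift t) - al t).
    rewrite (_ : S1 + z - (S1 + S2) = z - S2); last by rewrite opprD addrACA subrr add0r.
    apply: memvB => //; apply: rpred_sum => t ht; apply: memvZ; by case: (hlift t ht).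
  rewrite (_ : uv u = 0 + (uv u - x) + x); last by rewrite add0r subrK.
  by apply: memv_add => //; apply: memv_add; rewrite ?span_nil ?mem0v.
have hsz : size es = \dim VJ.
  by rewrite size_map hdim -!cardE Hcnt.
have hf0 : free ([::] : seq 'rV[F]_k) by rewrite /free span_nil dimv0.
have hs0 : {subset ([::] : seq 'rV[F]_k) <= VJ} by [].
have [ds [h1 h2 h3 h4]] := greedy hRA hes hs0 hf0 hA hsz.
pose phi t := nth 0 ds (index t Il).
have hphiV : forall t, phi t \in VJ.
  move=> t; rewrite /phi; case: (ltnP (index t Il) (size ds)) => hi.
    by apply: h2; exact: mem_nth.
  by rewrite nth_default // mem0v.
have hphiZ : forall t, s t == sp -> rhoL (phi t) - al t \in Z.
  move=> t ht.
  have hti : t \in Il by rewrite mem_enum.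
  have hidx : (index t Il < size es)%N by rewrite size_map index_mem.
  have := h3 _ hidx; rewrite (nth_map t) ?index_mem // nth_index // => hR.
  move: hR; rewrite memv_cap -memv_preim => /andP [_ hR].
  rewrite (_ : rhoL (phi t) - al t = rhoL (phi t - lift t) + (rhoL (lift t) - al t)).
    apply: memvD => //; by case: (hlift t ht).
  by rewrite linearB /= addrA subrK.
have /fin_all_exists [c hc] : forall t, exists c : 'I_k -> F, s t == sp ->
    al t - rhoL (phi t) = \sum_(u | span_lt (s0 u) sp) c u *: be u.
  move=> t; case: (boolP (s t == sp)) => ht; last by exists (fun _ => 0).
  have : al t - rhoL (phi t) \in Z by rewrite -opprB rpredN; exact: hphiZ.
  by move/memv_sum_lines => [c' e']; exists c'.
pose lam t : 'rV[F]_k := \row_u (if span_lt (s0 u) sp then c t u else 0).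
exists (fun t => phi t + lam t); split.
- move=> t /eqP ht; rewrite linearD /= (rhoLE (lam t)).
  have -> : \sum_(u < k) lam t 0 u *: be u = al t - rhoL (phi t).
    rewrite (hc t ht) [in RHS]big_mkcond /=; apply: eq_bigr => u _; rewrite mxE.
    by case: ifP => _; rewrite ?scale0r.
  by rewrite addrC subrK.
- move=> t u ht; rewrite mxE => hne.
  case: (eqVneq (phi t 0 u) 0) => [z|nz].
    right; move: hne; rewrite z add0r mxE; by case: ifP => // _; rewrite eqxx.
  left; apply/eqP; apply/negPn/negP => hu; move: nz; by rewrite (f1 _ _ (hphiV t) hu) eqxx.
- move=> y hy t ht.
  pose w := \sum_(t | s t == sp) y 0 t *: phi t.
  have hw : w = 0.
    apply/rowP => u; rewrite mxE.
    case: (boolP (s0 u == sp)) => hu; last first.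
      by apply: f1 hu; apply: rpred_sum => t' _; apply: memvZ.
    rewrite -(hy u (eqP hu)) /w summxE; apply: eq_bigr => t' _; rewrite !mxE.
    by rewrite (eqP hu) lt_irr addr0.
  have hti : t \in Il by rewrite mem_enum; apply/eqP.
  move: h4 => /= /(freeP (X := in_tuple ds)) hfree.
  pose kk := fun j : 'I_(size ds) => y 0 (nth t Il j).
  have hsum : \sum_(i < size ds) kk i *: (in_tuple ds)`_i = w.
    rewrite /kk /= -(big_mkord xpredT (fun i => y 0 (nth t Il i) *: nth 0 ds i)) h1 size_map.
    rewrite /w -big_enum /= -/Il (big_nth t).
    apply: eq_big_nat => j hj; rewrite /phi index_uniq ?enum_uniq //; lia.
  have hk := hfree kk (etrans hsum hw).
  have hj : (index t Il < size ds)%N by rewrite h1 size_map index_mem.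
  by have := hk (Ordinal hj); rewrite /kk /= nth_index.
Qed.

End Build.

Section Phi.
Variables (F : finFieldType) (n : nat) (n_gt0 : (0 < n)%N) (k : nat).
Variables (s s0 : 'I_k -> tspan n) (al be : 'I_k -> 'rV[F]_n).
Hypothesis HL1 : forall t, al t \in (Y0 s0 be (pred1 (s t)) + Y0 s0 be (fun x => span_lt x (s t)))%VS.
Hypothesis HL2 : forall sp, (Y0 s0 be (pred1 sp) <= Ya s al (pred1 sp) + Y0 s0 be (fun x => span_lt x sp))%VS.
Hypothesis Hcnt : forall sp, #|[pred t | s t == sp]| = #|[pred u | s0 u == sp]|.

Definition ht (x : tspan n) := #|[set z | span_lt x z]|.

Lemma ht_lt x z : span_lt x z -> (ht z < ht x)%N.
Proof.
move=> hxz; apply: proper_card; apply/properP; split.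
  apply/subsetP => w; rewrite !inE => hzw; exact: (lt_trans n_gt0 hxz hzw).
by exists z; rewrite !inE ?hxz ?lt_irr.
Qed.

Lemma build_phi : exists Phi : 'M[F]_k,
  [/\ forall t, \sum_(u < k) Phi t u *: be u = al t,
      forall t u, Phi t u != 0 -> s0 u = s t \/ span_lt (s0 u) (s t),
      Phi \in unitmx &
      forall Q : pred (tspan n), (forall x z, Q x -> span_lt x z -> Q z) ->
      forall y : 'rV[F]_k, (forall u, Q (s0 u) -> (y *m Phi) 0 u = 0) ->
      forall t, Q (s t) -> y 0 t = 0].
Proof.
have /fin_all_exists [rows hrows] := class_rows HL1 HL2 Hcnt.
pose Phi := \matrix_(t, u) rows (s t) t 0 u.
have hJ : forall Q : pred (tspan n), (forall x z, Q x -> span_lt x z -> Q z) ->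
      forall y : 'rV[F]_k, (forall u, Q (s0 u) -> (y *m Phi) 0 u = 0) ->
      forall t, Q (s t) -> y 0 t = 0.
  move=> Q hQ y hy.
  suff H : forall N t, (ht (s t) < N)%N -> Q (s t) -> y 0 t = 0.
    by move=> t; apply: (H (ht (s t)).+1).
  elim=> [|N IH] t // hN hQt.
  have [_ _ hBI] := hrows (s t).
  apply: (hBI y) => // u hu.
  have := hy u; rewrite hu => /(_ hQt); rewrite mxE.
  rewrite (bigID (fun t' => s t' == s t)) /= => e; rewrite -[RHS]e.
  rewrite [X in _ = _ + X]big1 ?addr0.
    by apply: eq_bigr => t' /eqP et'; rewrite mxE et'.
  move=> t' hne; rewrite mxE.
  have [z|nz] := eqVneq (rows (s t') t' 0 u) 0; first by rewrite z mulr0.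
  have [_ htri _] := hrows (s t').
  case: (htri t' u erefl nz) => [e1|hlt].
    by move: hne; rewrite -e1 hu eqxx.
  rewrite hu in hlt.
  rewrite (IH t') ?mul0r //.
    by have := ht_lt hlt; lia.
  exact: hQ hQt hlt.
exists Phi; split => //.
- move=> t; have [hl _ _] := hrows (s t).
  by rewrite -(hl t erefl) rhoLE; apply: eq_bigr => u _; rewrite mxE.
- move=> t u; rewrite mxE => hne; have [_ htri _] := hrows (s t); exact: htri.
- rewrite -row_free_unit -kermx_eq0; apply/eqP/row_matrixP => i; rewrite row0.
  have hK : row i (kermx Phi) *m Phi = 0 by apply/sub_kermxP; rewrite row_sub.
  apply/rowP => j; rewrite [RHS]mxE.
  by apply: (hJ xpredT) => // u _; rewrite hK mxE.
Qed.

End Phi.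

Section Final.
Variables (F : finFieldType) (n : nat) (n_gt0 : (0 < n)%N).
Notation fac_t := (seq (tspan n * 'rV[F]_n)).

Lemma Y_mono (fac : fac_t) (P Q : pred (tspan n)) :
  (forall x, P x -> Q x) -> (Ysum fac P <= Ysum fac Q)%VS.
Proof.
move=> h; apply/subv_sumP => t ht; apply: (sumv_sup t) => //; exact: h.
Qed.

Lemma Y_split (fac : fac_t) s :
  Ysum fac (fun x => span_le x s) = (Ysum fac (pred1 s) + Ysum fac (fun x => span_lt x s))%VS.
Proof.
apply: subv_anti; apply/andP; split.
- apply/subv_sumP => t ht; move: ht; rewrite (le_eqVlt n_gt0) => /orP[he|hl].
  + by apply: subv_trans (addvSl _ _); apply: (sumv_sup t).
  + by apply: subv_trans (addvSr _ _); apply: (sumv_sup t).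
- rewrite subv_add; apply/andP; split; apply: Y_mono => x /=.
  + by move/eqP ->; exact: le_refl.
  + exact: lt_le.
Qed.

Lemma Y_ltsum (fac : fac_t) s :
  (\sum_(s' | span_lt s' s) Ysum fac (fun x => span_le x s'))%VS = Ysum fac (fun x => span_lt x s).
Proof.
apply: subv_anti; apply/andP; split.
- apply/subv_sumP => s' hs'; apply: Y_mono => x hx.
  rewrite /span_lt (le_trans n_gt0 hx (lt_le hs')) andbT.
  apply/eqP => e; subst x.
  have e2 := le_antisym n_gt0 hx (lt_le hs'); move: hs'; by rewrite /span_lt e2 eqxx.
- apply/subv_sumP => t ht; apply: (sumv_sup (nth (def0 F n) fac t).1) => //.
  apply: subv_trans (_ : Ysum fac (fun x => span_le x (nth (def0 F n) fac t).1) <= _)%VS.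
    by apply: (sumv_sup t) => //; exact: le_refl.
  exact: subvv.
Qed.

Lemma K1 (fac : fac_t) s :
  (<<[seq p.2 | p <- fac & p.1 == s]>> = Ysum fac (pred1 s))%VS.
Proof.
rewrite span_def big_map big_filter (big_nth (def0 F n)) big_mkord.
by [].
Qed.

Lemma Y_k (fac : fac_t) (P : pred (tspan n)) k : size fac = k ->
  Ysum fac P = (\sum_(t < k | P (nth (def0 F n) fac t).1) <[(nth (def0 F n) fac t).2]>)%VS.
Proof.
by move=> hk; rewrite /Ysum; case: k / hk.
Qed.

Lemma card_count (T : eqType) (x0 : T) (l : seq T) (P : pred T) k : size l = k ->
  #|[pred t : 'I_k | P (nth x0 l t)]| = count P l.
Proof.
move=> hk; rewrite -sum1_card -sum1_count (big_nth x0) hk big_mkord.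
by apply: eq_bigl => t; rewrite inE.
Qed.

End Final.

Local Close Scope ring_scope.
Unset Implicit Arguments.

Theorem mainTheorem10 (F : finFieldType) (n : nat) (n_gt0 : (0 < n)%N)
    (T : trellis F n) (fac : seq (tspan n * 'rV[F]_n)) :
  is_linear T -> is_trim T -> is_reduced T ->
  span_distribution T (map fst fac) ->
  (forall p, p \in fac -> vec_has_span p.2 p.1) ->
  (trellis_equiv T (tensor_list fac) <->
   (forall s, s \in map fst fac ->
      Cspan T s = (<<[seq p.2 | p <- fac & p.1 == s]>>
                   + \sum_(s' : tspan n | span_lt s' s) Cspan T s')%VS)).
Proof.
move=> hlin _ _ [fac0 [[hsp0 [_ heq0]] hperm]] hspan.
have hspan0 : forall p, p \in fac0 -> vec_has_span p.2 p.1 by move=> p hp; case: (hsp0 p hp).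
have CT0 : forall s, Cspan T s = Ysum fac0 (fun x => span_le x s).
  by move=> s; rewrite (Cspan_equiv n_gt0 s hlin heq0 hspan0) (lemmaA n_gt0 s hspan0).
split.
- move=> heq s _.
  have CT : forall s, Cspan T s = Ysum fac (fun x => span_le x s).
    by move=> s'; rewrite (Cspan_equiv n_gt0 s' hlin heq hspan) (lemmaA n_gt0 s' hspan).
  rewrite CT K1 (eq_bigr (fun s' => Ysum fac (fun x => span_le x s'))) => [|s' _]; last exact: CT.
  by rewrite (Y_ltsum n_gt0) (Y_split n_gt0).
move=> H.
have H' : forall s, s \in map fst fac -> Ysum fac0 (fun x => span_le x s) =
    (Ysum fac (pred1 s) + Ysum fac0 (fun x => span_lt x s))%VS.
  move=> s hs; rewrite -CT0 H // K1; congr (_ + _)%VS.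
  rewrite (eq_bigr (fun s' => Ysum fac0 (fun x => span_le x s'))) => [|s' _]; last exact: CT0.
  exact: Y_ltsum.
pose k := size fac0.
have hk : size fac = k by rewrite /k -(size_map fst fac) -(size_map fst fac0) (perm_size hperm).
pose s (t : 'I_k) := (nth (def0 F n) fac t).1.
pose al (t : 'I_k) := (nth (def0 F n) fac t).2.
pose s0 (u : 'I_k) := (nth (def0 F n) fac0 u).1.
pose be (u : 'I_k) := (nth (def0 F n) fac0 u).2.
have hYa : forall P, Ya s al P = Ysum fac P by move=> P; rewrite (Y_k P hk).
have HL1 : forall t, al t \in (Y0 s0 be (pred1 (s t)) + Y0 s0 be (fun x => span_lt x (s t)))%VS.
  move=> t.
  have hs : s t \in map fst fac by apply: map_f; apply: mem_nth; rewrite hk.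
  rewrite (_ : (Y0 s0 be (pred1 (s t)) + Y0 s0 be (fun x => span_lt x (s t)))%VS
              = Ysum fac0 (fun x => span_le x (s t))); last by rewrite (Y_split n_gt0).
  rewrite H' //; apply: (subvP (addvSl _ _)); rewrite -hYa.
  apply: (subvP (@sumv_sup _ _ _ t (fun t' => pred1 (s t) (s t')) <[al t]>%VS (fun t' => <[al t']>%VS) (eqxx _) (subvv _))); exact: memv_line.
have HL2 : forall sp, (Y0 s0 be (pred1 sp) <= Ya s al (pred1 sp) + Y0 s0 be (fun x => span_lt x sp))%VS.
  move=> sp; rewrite hYa; case: (boolP (sp \in map fst fac)) => hsp.
    rewrite -H' //; apply: Y_mono => x /eqP ->; exact: le_refl.
  have -> : Y0 s0 be (pred1 sp) = 0%VS.
    apply/eqP; rewrite -subv0; apply/subv_sumP => u /eqP hu; exfalso; apply: (negP hsp).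
    by rewrite -(perm_mem hperm) -hu; apply: map_f; apply: mem_nth.
  exact: sub0v.
have Hcnt : forall sp, #|[pred t | s t == sp]| = #|[pred u | s0 u == sp]|.
  move=> sp.
  have e1 : #|[pred t | s t == sp]| = count (fun p => p.1 == sp) fac :=
    card_count (def0 F n) (fun p => p.1 == sp) hk.
  have e2 : #|[pred u | s0 u == sp]| = count (fun p => p.1 == sp) fac0 :=
    card_count (def0 F n) (fun p => p.1 == sp) (erefl (size fac0)).
  rewrite e1 e2 -!(count_map fst (pred1 sp)).
  by move/seq.permP: hperm => ->.
have [Phi [hA hB hU hJ]] := build_phi n_gt0 HL1 HL2 Hcnt.
have heqP : trellis_equiv (tensor_list fac) (tensor_list fac0).
  apply: (@equiv_of_mx F n k fac fac0 hk erefl Phi) => //.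
  - move=> i t u hne hu; case: (hB t u hne) => [e|hl].
      by move: hu; rewrite -/(s0 u) e.
    exact (le_elem n_gt0 (lt_le hl) hu).
  - move=> i y hy t ht; apply: (hJ (fun x => elem_in x i)) => //.
    move=> x z hx hl; exact (le_elem n_gt0 (lt_le hl) hx).
exact: equiv_trans heq0 (equiv_sym heqP).
Qed.
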